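(* If $\{x_1:A_1,\dots,x_n:A_n\}\vdash M:B$ is derivable in $\lambda$A, then for every $\lambda$A-frame $(\mathcal W,\rhd)$, every $p\in\mathcal W$, every hereditary type environment $\eta$ and every individual environment $\rho$ with $\rho(x_i)\in\mathcal I[A_i]^\eta_p$ for all $i=1,\dots,n$, we have $[\![M]\!]_\rho\in\mathcal I[B]^\eta_p$.
   Context: Type expressions: fix a countably infinite set of type variables $X,Y,Z,\dots$. Pseudo type expressions are generated by $A::=X\mid A\to A\mid \bullet A\mid \mu X.A$ ($\mu$ binds $X$; $\alpha$-convertible expressions are identified; $\to$ associates to the right; $\bullet$ binds tighter than $\to$, which binds tighter than $\mu$). $A[B/X]$ denotes capture-avoiding substitution. $\top$ abbreviates $\mu X.\bullet X$, and $\bullet^n A$ denotes $A$ prefixed by $n$ copies of $\bullet$. The tail $t(A)$ is defined by $t(X)=X$, $t(A\to B)=t(B)$, $t(\bullet A)=\bullet t(A)$, $t(\mu X.A)=\mu X.t(A)$; it always has the form $\bullet^{m_0}\mu X_1.\bullet^{m_1}\mu X_2.\cdots\mu X_n.\bullet^{m_n}Y$. $A$ is a $\top$-variant iff $Y=X_i$ for some $1\le i\le n$ with $X_i\notin\{X_{i+1},\dots,X_n\}$ and $m_i+\dots+m_n\ge 1$. $A$ is proper in $X$ iff: a variable $Y$ is proper in $X$ iff $Y\neq X$; $\bullet A$ is always proper in $X$; $A\to B$ is proper in $X$ iff both $A,B$ are proper in $X$ or $B$ is a $\top$-variant; for $Y\ne X$, $\mu Y.A$ is proper in $X$ iff $A$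 is proper in $X$ or $\mu Y.A$ is a $\top$-variant. Type expressions are the least set of pseudo type expressions containing all type variables, closed under $\to$ and $\bullet$, and containing $\mu X.A$ whenever it contains $A$ and $A$ is proper in $X$. Equality: $\cong$ is the least relation on type expressions such that: $A\cong A$; $A\cong B$ implies $B\cong A$; $A\cong B$ and $B\cong C$ imply $A\cong C$; $A\cong B$ implies $\bullet A\cong\bullet B$; $A\cong C$ and $B\cong D$ imply $A\to B\cong C\to D$; $A\to\top\cong\top$; $\mu X.A\cong A[\mu X.A/X]$; and if $A\cong C[A/X]$ with $C$ proper in $X$, then $A\cong\mu X.C$. $\simeq$ is the least relation satisfying the same closure conditions and additionally $\bullet(A\to B)\simeq\bullet A\to\bullet B$. Subtyping: a subtyping assumption $\gamma$ is a finite set of pairs $X\preceq Y$ of type variables in which each type variable occurs at most once; $FTV(\gamma)$ is the set of variables occurring in it. Judgments $\gamma\vdash A\preceq B$ are derived by the rules: $\gamma\cup\{X\preceq Y\}\vdash X\preceq Y$; $\gamma\vdash A\preceq\top$; from $A\simeq B$ infer $\gamma\vdash A\preceq B$; from $\gamma_1\vdash A\preceq B$ and $\gamma_2\vdash B\preceq C$ infer $\gamma_1\cup\gamma_2\vdash A\preceq C$; from $\gamma\vdash A\preceq B$ infer $\gamma\vdash\bullet A\preceq\bullet B$; from $\gamma_1\vdash A'\preceq A$ and $\gamma_2\vdash B\preceq B'$ infer $\gamma_1\cup\gamma_2\vdash A\to B\preceq A'\to B'$; from $\gamma\cup\{X\preceq Y\}\vdash A\preceq B$ infer $\gamma\vdash\mu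 X.A\preceq\mu Y.B$, provided $X\notin FTV(\gamma)\cup FTV(B)$, $Y\notin FTV(\gamma)\cup FTV(A)$, $A$ is proper in $X$ and $B$ is proper in $Y$; and $\gamma\vdash A\preceq\bullet A$. All sets $\gamma\cup\{X\preceq Y\}$, $\gamma_1\cup\gamma_2$ must be well-formed subtyping assumptions. $A\preceq B$ means $\{\}\vdash A\preceq B$ is derivable. Typing system $\lambda$A: untyped $\lambda$-terms $M::=x\mid\lambda x.M\mid MM$ (identified up to $\alpha$-conversion). A typing context $\Gamma$ is a finite map from individual variables to type expressions, written $\{x_1:A_1,\dots,x_n:A_n\}$; $\bullet\Gamma$ is $\{x_1:\bullet A_1,\dots,x_n:\bullet A_n\}$; unions of contexts must be well-formed (a variable receives at most one type). Rules: (var) $\Gamma\cup\{x:A\}\vdash x:A$; (shift) from $\bullet\Gamma\vdash M:\bullet A$ infer $\Gamma\vdash M:A$; ($\top$) $\Gamma\vdash M:\top$; ($\preceq$) from $\Gamma\vdash M:A$ and $A\preceq B$ infer $\Gamma\vdash M:B$; ($\to$I) from $\Gamma\cup\{x:A\}\vdash M:B$ infer $\Gamma\vdash\lambda x.M:A\to B$; ($\to$E) from $\Gamma_1\vdash M:A\to B$ and $\Gamma_2\vdash N:A$ infer $\Gamma_1\cup\Gamma_2\vdash MN:B$. Semantics: a syntactical $\lambda$-algebra $(\mathcal V,\cdot,[\![-]\!])$ consists of a nonempty set $\mathcal V$, a map $\cdot:\mathcal V\times\mathcal V\to\mathcal V$, and values $[\![M]\!]_\rho\in\mathcal V$ for untyped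 $\lambda$-terms $M$ and maps $\rho$ from individual variables to $\mathcal V$ (individual environments), such that $[\![x]\!]_\rho=\rho(x)$, $[\![MN]\!]_\rho=[\![M]\!]_\rho\cdot[\![N]\!]_\rho$, $[\![\lambda x.M]\!]_\rho\cdot v=[\![M]\!]_{\rho[v/x]}$, $[\![M]\!]_\rho$ depends only on $\rho$ restricted to free variables of $M$, and $M=_\beta N$ implies $[\![M]\!]_\rho=[\![N]\!]_\rho$; fix one. A well-founded frame is a pair $(\mathcal W,\rhd)$ with $\mathcal W$ nonempty and $\rhd$ a binary relation on $\mathcal W$ admitting no infinite chain $p_0\rhd p_1\rhd p_2\rhd\cdots$; $\trianglerighteq$ denotes the reflexive-transitive closure of $\rhd$. $\rhd$ is locally linear if whenever $p\rhd q$ there is $r$ with $p\trianglerighteq r\rhd q$ such that $r\rhd s$ implies $q\trianglerighteq s$ for all $s$. A $\lambda$A-frame is a well-founded frame whose $\rhd$ is locally linear. A type environment $\eta$ assigns a set $\eta(X)_p\subseteq\mathcal V$ to each type variable $X$ and world $p$; it is hereditary if $p\rhd q$ implies $\eta(X)_p\subseteq\eta(X)_q$. For hereditary $\eta$, $\mathcal I[A]^\eta_p\subseteq\mathcal V$ is defined (by well-founded induction on $p$ and the syntactic rank of $A$) by: $\mathcal I[A]^\eta_p=\mathcal V$ if $A$ is a $\top$-variant; otherwise $\mathcal I[X]^\eta_p=\eta(X)_p$; $\mathcal I[\bullet A]^\eta_p=\{u\mid u\in\mathcal I[A]^\eta_q\text{ for all }q\text{ with }p\rhd q\}$; $\mathcal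 I[A\to B]^\eta_p=\{u\mid \text{for all }q\text{ with }p\trianglerighteq q\text{ and all }v\in\mathcal I[A]^\eta_q,\ u\cdot v\in\mathcal I[B]^\eta_q\}$; $\mathcal I[\mu X.A]^\eta_p=\mathcal I[A[\mu X.A/X]]^\eta_p$. *)

(* Defs.v *)
(* Locally-nameless syntax: free variables are names (nat),
   bound variables are de Bruijn indices, so alpha-convertible expressions
   are syntactically identical.  Binding constructs are written through
   [close], e.g.  mu X. A  is  [TMu (close X A)],  lambda x. M  is
   [Lam (closet x M)]. *)
From Stdlib Require Import List Arith Relations.
Import ListNotations.

Inductive ty : Type :=
| TFree  (X : nat)
| TBound (i : nat)
| TArr   (A B : ty)
| TLater (A : ty)
| TMu    (A : ty).

Fixpoint open_rec (k : nat) (U A : ty) : ty :=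
  match A with
  | TFree X => TFree X
  | TBound i => if Nat.eqb i k then U else TBound i
  | TArr A B => TArr (open_rec k U A) (open_rec k U B)
  | TLater A => TLater (open_rec k U A)
  | TMu A => TMu (open_rec (S k) U A)
  end.
Definition open (A U : ty) : ty := open_rec 0 U A.

Fixpoint close_rec (k X : nat) (A : ty) : ty :=
  match A with
  | TFree Y => if Nat.eqb Y X then TBound k else TFree Y
  | TBound i => TBound i
  | TArr A B => TArr (close_rec k X A) (close_rec k X B)
  | TLater A => TLater (close_rec k X A)
  | TMu A => TMu (close_rec (S k) X A)
  end.
Definition close (X : nat) (A : ty) : ty := close_rec 0 X A.

(* capture-avoiding substitution A[U/X] (U closed w.r.t. indices) *)
Fixpoint subst (X : nat) (U A : ty) : ty :=
  match A with
  | TFree Y => if Nat.eqb Y X then U else TFree Y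
  | TBound i => TBound i
  | TArr A B => TArr (subst X U A) (subst X U B)
  | TLater A => TLater (subst X U A)
  | TMu A => TMu (subst X U A)
  end.

Fixpoint fv (A : ty) : list nat :=
  match A with
  | TFree X => [X]
  | TBound _ => []
  | TArr A B => fv A ++ fv B
  | TLater A => fv A
  | TMu A => fv A
  end.

Definition top : ty := TMu (TLater (TBound 0)).

Fixpoint tail (A : ty) : ty :=
  match A with
  | TFree X => TFree X
  | TBound i => TBound i
  | TArr _ B => tail B
  | TLater A => TLater (tail A)
  | TMu A => TMu (tail A)
  end.

(* On a tail  bullet^{m0} mu X1. bullet^{m1} ... mu Xn. bullet^{mn} Y :
   ctx records, for each enclosing mu binder (innermost first), whether a
   bullet has occurred after (inside) it.  The tail is a top-variant iff Y
   is bound by some mu X_i (innermost binding) and some bullet occurs after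
   that binder, i.e. m_i + ... + m_n >= 1. *)
Fixpoint tv (A : ty) (ctx : list bool) : bool :=
  match A with
  | TFree _ => false
  | TBound j => nth j ctx false
  | TArr _ _ => false
  | TLater A => tv A (map (fun _ => true) ctx)
  | TMu A => tv A (false :: ctx)
  end.

Definition topv (A : ty) : bool := tv (tail A) [].

Fixpoint proper (X : nat) (A : ty) : bool :=
  match A with
  | TFree Y => negb (Nat.eqb Y X)
  | TBound _ => true
  | TArr A B => (proper X A && proper X B) || topv B
  | TLater _ => true
  | TMu A' => proper X A' || topv (TMu A')
  end.

Fixpoint proper_b (k : nat) (A : ty) : bool :=
  match A with
  | TFree _ => true
  | TBound i => negb (Nat.eqb i k)
  | TArr A B => (proper_b k A && proper_b k B) || topv B
  | TLater _ => true
  | TMu A' => proper_b (S k) A' || topv (TMu A')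
  end.

Fixpoint wf_rec (n : nat) (A : ty) : bool :=
  match A with
  | TFree _ => true
  | TBound i => Nat.ltb i n
  | TArr A B => wf_rec n A && wf_rec n B
  | TLater A => wf_rec n A
  | TMu A => wf_rec (S n) A && proper_b 0 A
  end.
Definition wf (A : ty) : Prop := wf_rec 0 A = true.

Inductive eqty (d : bool) : ty -> ty -> Prop :=
| eq_refl A : wf A -> eqty d A A
| eq_sym A B : eqty d A B -> eqty d B A
| eq_trans A B C : eqty d A B -> eqty d B C -> eqty d A C
| eq_later A B : eqty d A B -> eqty d (TLater A) (TLater B)
| eq_arr A B C D : eqty d A C -> eqty d B D -> eqty d (TArr A B) (TArr C D)
| eq_arrtop A : wf A -> eqty d (TArr A top) top
| eq_unfold A : wf (TMu A) -> eqty d (TMu A) (open A (TMu A))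
| eq_fix X A C : wf A -> wf C -> proper X C = true ->
    eqty d A (subst X A C) -> eqty d A (TMu (close X C))
| eq_dist A B : d = true -> wf A -> wf B ->
    eqty d (TLater (TArr A B)) (TArr (TLater A) (TLater B)).

Definition cong := eqty false.
Definition simeq := eqty true.

(* finite sets are represented by lists, up to having the same elements *)
Definition seteq {T : Type} (l1 l2 : list T) : Prop := forall a, In a l1 <-> In a l2.

Definition FTV (g : list (nat * nat)) : list nat :=
  flat_map (fun p => [fst p; snd p]) g.

Definition wfg (g : list (nat * nat)) : Prop :=
  (forall X Y, In (X, Y) g -> X <> Y) /\
  (forall p q, In p g -> In q g -> p <> q ->
     fst p <> fst q /\ fst p <> snd q /\ snd p <> fst q /\ snd p <> snd q).

Inductive sub : list (nat * nat) -> ty -> ty -> Prop :=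
| sub_assm g X Y : wfg g -> In (X, Y) g -> sub g (TFree X) (TFree Y)
| sub_top g A : wfg g -> wf A -> sub g A top
| sub_eq g A B : wfg g -> simeq A B -> sub g A B
| sub_trans g g1 g2 A B C : sub g1 A B -> sub g2 B C ->
    seteq g (g1 ++ g2) -> wfg g -> sub g A C
| sub_later g A B : sub g A B -> sub g (TLater A) (TLater B)
| sub_arr g g1 g2 A A' B B' : sub g1 A' A -> sub g2 B B' ->
    seteq g (g1 ++ g2) -> wfg g -> sub g (TArr A B) (TArr A' B')
| sub_mu g g' X Y A B : sub g' A B -> seteq g' ((X, Y) :: g) -> wfg g' ->
    ~ In X (FTV g) -> ~ In X (fv B) -> ~ In Y (FTV g) -> ~ In Y (fv A) ->
    proper X A = true -> proper Y B = true ->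
    sub g (TMu (close X A)) (TMu (close Y B))
| sub_next g A : wfg g -> wf A -> sub g A (TLater A).

Definition subty (A B : ty) : Prop := sub [] A B.

Inductive tm : Type :=
| Var (x : nat)
| BVar (i : nat)
| Lam (M : tm)
| App (M N : tm).

Fixpoint closet_rec (k x : nat) (M : tm) : tm :=
  match M with
  | Var y => if Nat.eqb y x then BVar k else Var y
  | BVar i => BVar i
  | Lam M => Lam (closet_rec (S k) x M)
  | App M N => App (closet_rec k x M) (closet_rec k x N)
  end.
Definition closet (x : nat) (M : tm) : tm := closet_rec 0 x M.

Fixpoint substt (x : nat) (N M : tm) : tm :=
  match M with
  | Var y => if Nat.eqb y x then N else Var y
  | BVar i => BVar i
  | Lam M => Lam (substt x N M)
  | App M1 M2 => App (substt x N M1) (substt x N M2)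
  end.

Fixpoint lct_rec (n : nat) (M : tm) : bool :=
  match M with
  | Var _ => true
  | BVar i => Nat.ltb i n
  | Lam M => lct_rec (S n) M
  | App M N => lct_rec n M && lct_rec n N
  end.
Definition lct (M : tm) : Prop := lct_rec 0 M = true.

Fixpoint fvt (M : tm) : list nat :=
  match M with
  | Var x => [x]
  | BVar _ => []
  | Lam M => fvt M
  | App M N => fvt M ++ fvt N
  end.

Inductive beta : tm -> tm -> Prop :=
| beta_root x M N : lct M -> lct N -> beta (App (Lam (closet x M)) N) (substt x N M)
| beta_lam x M N : beta M N -> beta (Lam (closet x M)) (Lam (closet x N))
| beta_appl M M' N : beta M M' -> lct N -> beta (App M N) (App M' N)
| beta_appr M N N' : lct M -> beta N N' -> beta (App M N) (App M N').

Definition beta_eq : tm -> tm -> Prop := clos_refl_sym_trans tm beta.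

Definition ctx := list (nat * ty).

(* a finite map from individual variables to type expressions *)
Definition wfc (G : ctx) : Prop :=
  (forall x A B, In (x, A) G -> In (x, B) G -> A = B) /\
  (forall x A, In (x, A) G -> wf A).

Definition later_ctx (G : ctx) : ctx := map (fun p => (fst p, TLater (snd p))) G.

Inductive typ : ctx -> tm -> ty -> Prop :=
| typ_var G x A : wfc G -> In (x, A) G -> typ G (Var x) A
| typ_shift G G' M A : typ G' M (TLater A) -> seteq G' (later_ctx G) -> wfc G ->
    typ G M A
| typ_top G M : wfc G -> lct M -> typ G M top
| typ_sub G M A B : typ G M A -> subty A B -> typ G M B
| typ_abs G G' x M A B : typ G' M B -> seteq G' ((x, A) :: G) -> wfc G' ->
    typ G (Lam (closet x M)) (TArr A B)
| typ_app G G1 G2 M N A B : typ G1 M (TArr A B) -> typ G2 N A ->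
    seteq G (G1 ++ G2) -> wfc G -> typ G (App M N) B.

Definition upd {V : Type} (rho : nat -> V) (x : nat) (v : V) : nat -> V :=
  fun y => if Nat.eqb y x then v else rho y.

Record lam_alg : Type := {
  V : Type;
  V_ne : inhabited V;
  app : V -> V -> V;
  den : tm -> (nat -> V) -> V;
  den_var : forall x rho, den (Var x) rho = rho x;
  den_app : forall M N rho, lct M -> lct N ->
      den (App M N) rho = app (den M rho) (den N rho);
  den_lam : forall x M rho v, lct M ->
      app (den (Lam (closet x M)) rho) v = den M (upd rho x v);
  den_fv : forall M rho rho', lct M ->
      (forall x, In x (fvt M) -> rho x = rho' x) -> den M rho = den M rho';
  den_beta : forall M N rho, lct M -> lct N -> beta_eq M N -> den M rho = den N rho
}.

Record frame : Type := {
  W : Type;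
  W_ne : inhabited W;
  R : W -> W -> Prop;
  R_wf : ~ exists f : nat -> W, forall n, R (f n) (f (S n));
  R_loclin : forall p q, R p q ->
      exists r, clos_refl_trans W R p r /\ R r q /\
        (forall s, R r s -> clos_refl_trans W R q s)
}.

Definition Rstar (F : frame) : W F -> W F -> Prop := clos_refl_trans (W F) (R F).

Definition hereditary (F : frame) {Val : Type} (eta : nat -> W F -> Val -> Prop) : Prop :=
  forall X p q u, R F p q -> eta X p u -> eta X q u.

(* I A p u  means  u ∈ I[A]^eta_p.  The interpretation is the (unique, by
   well-founded recursion) family satisfying its defining clauses on type
   expressions. *)
Definition interp_spec (L : lam_alg) (F : frame) (eta : nat -> W F -> V L -> Prop)
  (I : ty -> W F -> V L -> Prop) : Prop :=
  (forall A p u, wf A -> topv A = true -> I A p u) /\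
  (forall X p u, topv (TFree X) = false -> (I (TFree X) p u <-> eta X p u)) /\
  (forall A p u, wf (TLater A) -> topv (TLater A) = false ->
     (I (TLater A) p u <-> forall q, R F p q -> I A q u)) /\
  (forall A B p u, wf (TArr A B) -> topv (TArr A B) = false ->
     (I (TArr A B) p u <->
        forall q, Rstar F p q -> forall v, I A q v -> I B q (app L u v))) /\
  (forall A p u, wf (TMu A) -> topv (TMu A) = false ->
     (I (TMu A) p u <-> I (open A (TMu A)) p u)).

(* Main.v *)
Require Import Defs.
From Stdlib Require Import List Arith Relations Lia Bool.
From Stdlib Require Import Classical ClassicalEpsilon FunctionalExtensionality Wellfounded.
Import ListNotations.

Fixpoint msubst (s : nat -> ty) (A : ty) : ty :=
  match A with
  | TFree X => s X
  | TBound i => TBound i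
  | TArr A B => TArr (msubst s A) (msubst s B)
  | TLater A => TLater (msubst s A)
  | TMu A => TMu (msubst s A)
  end.

Fixpoint sc (n : nat) (A : ty) : bool :=
  match A with
  | TFree _ => true
  | TBound i => Nat.ltb i n
  | TArr A B => sc n A && sc n B
  | TLater A => sc n A
  | TMu A => sc (S n) A
  end.

Lemma wf_sc : forall A n, wf_rec n A = true -> sc n A = true.
Proof.
  induction A; simpl; intros; auto.
  - apply andb_true_iff in H as [H1 H2]; rewrite IHA1, IHA2; auto.
  - apply andb_true_iff in H as [H1 H2]; auto.
Qed.

Lemma sc_tail : forall A n, sc n A = true -> sc n (Defs.tail A) = true.
Proof.
  induction A; simpl; intros; auto.
  apply andb_true_iff in H as [H1 H2]; auto.
Qed.

Lemma sc_weaken : forall A n m, sc n A = true -> n <= m -> sc m A = true.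
Proof.
  induction A; simpl; intros; auto.
  - apply Nat.ltb_lt in H; apply Nat.ltb_lt; lia.
  - apply andb_true_iff in H as [H1 H2]; rewrite (IHA1 n m), (IHA2 n m); auto.
  - apply (IHA n); auto.
  - apply (IHA (S n)); auto; lia.
Qed.

Lemma wf_weaken : forall A n m, wf_rec n A = true -> n <= m -> wf_rec m A = true.
Proof.
  induction A; simpl; intros; auto.
  - apply Nat.ltb_lt in H; apply Nat.ltb_lt; lia.
  - apply andb_true_iff in H as [H1 H2]; rewrite (IHA1 n m), (IHA2 n m); auto.
  - apply (IHA n); auto.
  - apply andb_true_iff in H as [H1 H2]; rewrite (IHA (S n)), H2; auto; lia.
Qed.

Lemma nth_map_true : forall (c : list bool) j,
  nth j (map (fun _ => true) c) false = Nat.ltb j (length c).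
Proof.
  induction c; destruct j; simpl; auto.
Qed.

Lemma tv_sc : forall A n c1 c2, sc n A = true -> n <= length c1 -> n <= length c2 ->
  (forall j, j < n -> nth j c1 false = nth j c2 false) -> tv A c1 = tv A c2.
Proof.
  induction A; simpl; intros; auto.
  - apply Nat.ltb_lt in H; auto.
  - apply (IHA n); auto; try (rewrite length_map; auto).
    intros j Hj. rewrite !nth_map_true.
    destruct (Nat.ltb_spec j (length c1)); destruct (Nat.ltb_spec j (length c2)); auto; lia.
  - apply (IHA (S n)); simpl; auto; try lia. intros [|j] Hj; simpl; auto. apply H2; lia.
Qed.

Lemma tv_closed : forall U c, sc 0 U = true -> tv (Defs.tail U) c = topv U.
Proof.
  intros. unfold topv. apply (tv_sc _ 0); simpl; auto; try lia.
  apply sc_tail; auto.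
Qed.

Lemma topv_open_gen : forall A k U c, length c <= k -> tv (Defs.tail A) c = true ->
  tv (Defs.tail (open_rec k U A)) c = true.
Proof.
  induction A; simpl; intros; auto.
  - destruct (Nat.eqb_spec i k); simpl; auto.
    subst. rewrite nth_overflow in H0 by lia. discriminate.
  - apply IHA; auto. rewrite length_map; auto.
  - apply IHA; simpl; auto. lia.
Qed.

Lemma topv_open : forall A k U, topv A = true -> topv (open_rec k U A) = true.
Proof.
  intros. unfold topv in *. apply topv_open_gen; simpl; auto. lia.
Qed.

Lemma topv_unfold_gen : forall A k U c b, length c = k ->
  tv (Defs.tail A) (c ++ [b]) = true -> topv U = true -> sc 0 U = true ->
  tv (Defs.tail (open_rec k U A)) c = true.
Proof.
  induction A; simpl; intros; try discriminate.
  - destruct (Nat.eqb_spec i k).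
    + rewrite tv_closed; auto.
    + simpl. destruct (Nat.lt_ge_cases i (length c)).
      * rewrite app_nth1 in H0; auto.
      * rewrite app_nth2 in H0 by auto. destruct (i - length c) eqn:E; try lia.
        simpl in H0. destruct n0; discriminate.
  - eapply IHA2; eauto.
  - rewrite map_app in H0. simpl in H0.
    apply (IHA k U (map (fun _ => true) c) true); auto. rewrite length_map; auto.
  - apply (IHA (S k) U (false :: c) b); simpl; auto.
Qed.

Lemma topv_msubst_gen : forall s A c, tv (Defs.tail A) c = true ->
  tv (Defs.tail (msubst s A)) c = true.
Proof.
  induction A; simpl; intros; auto; discriminate.
Qed.

Lemma topv_msubst : forall s A, topv A = true -> topv (msubst s A) = true.
Proof. intros; apply topv_msubst_gen; auto. Qed.

Lemma topv_close_gen : forall A k X c, length c <= k ->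
  tv (Defs.tail (close_rec k X A)) c = tv (Defs.tail A) c.
Proof.
  induction A; simpl; intros; auto.
  - destruct (Nat.eqb_spec X X0); simpl; auto. apply nth_overflow; lia.
  - apply IHA. rewrite length_map; auto.
  - apply IHA. simpl; lia.
Qed.

Lemma topv_close : forall A k X, topv (close_rec k X A) = topv A.
Proof. intros; unfold topv; apply topv_close_gen; simpl; lia. Qed.

Lemma open_sc_id : forall T n k U, sc n T = true -> n <= k -> open_rec k U T = T.
Proof.
  induction T; simpl; intros; auto.
  - apply Nat.ltb_lt in H. destruct (Nat.eqb_spec i k); auto; lia.
  - apply andb_true_iff in H as [H1 H2]; rewrite (IHT1 n), (IHT2 n); auto.
  - rewrite (IHT n); auto.
  - rewrite (IHT (S n)); auto; lia.
Qed.

Lemma proper_b_sc : forall U n j, sc n U = true -> n <= j -> proper_b j U = true.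
Proof.
  induction U; simpl; intros; auto.
  - apply Nat.ltb_lt in H. destruct (Nat.eqb_spec i j); auto; lia.
  - apply andb_true_iff in H as [H1 H2]. rewrite (IHU1 n), (IHU2 n); auto.
  - rewrite (IHU (S n)); auto; lia.
Qed.

Lemma proper_b_open : forall A j k U, proper_b j A = true -> j <> k -> sc 0 U = true ->
  proper_b j (open_rec k U A) = true.
Proof.
  induction A; simpl; intros; auto.
  - destruct (Nat.eqb_spec i k); auto. apply (proper_b_sc _ 0); auto; lia.
  - apply orb_true_iff in H as [H|H].
    + apply andb_true_iff in H as [H2 H3]. rewrite IHA1, IHA2; auto.
    + rewrite topv_open; auto. apply orb_true_r.
  - apply orb_true_iff in H as [H|H].
    + rewrite IHA; auto.
    + apply orb_true_iff; right. apply (topv_open (TMu A) k U); auto.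
Qed.

Lemma wf_open_gen : forall A n U, wf_rec (S n) A = true -> wf_rec 0 U = true ->
  wf_rec n (open_rec n U A) = true.
Proof.
  induction A; simpl; intros; auto.
  - apply Nat.ltb_lt in H. destruct (Nat.eqb_spec i n).
    + apply (wf_weaken _ 0); auto; lia.
    + simpl; apply Nat.ltb_lt; lia.
  - apply andb_true_iff in H as [H1 H2]; rewrite IHA1, IHA2; auto.
  - apply andb_true_iff in H as [H1 H2]. rewrite IHA; auto. simpl.
    apply proper_b_open; auto. apply wf_sc; auto.
Qed.

Lemma wf_open : forall A, wf (TMu A) -> wf (open A (TMu A)).
Proof.
  unfold wf, open; intros. apply wf_open_gen; auto.
  simpl in H. apply andb_true_iff in H as [H1 H2]; auto.
Qed.

Lemma topv_unfold : forall A, wf (TMu A) -> topv (TMu A) = true ->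
  topv (open A (TMu A)) = true.
Proof.
  intros. unfold topv, open in *. simpl in H0.
  apply (topv_unfold_gen A 0 (TMu A) [] false); simpl; auto.
  unfold wf in H; simpl in H; apply andb_true_iff in H as [H H'].
  apply (wf_sc _ 1); auto.
Qed.

Fixpoint rank (A : ty) : nat :=
  if topv A then 0 else
  match A with
  | TArr A1 A2 => S (max (rank A1) (rank A2))
  | TMu A' => S (rank A')
  | _ => 0
  end.

Lemma topv_arr : forall A B, topv (TArr A B) = topv B.
Proof. reflexivity. Qed.

Lemma topv_later : forall A, topv (TLater A) = topv A.
Proof. reflexivity. Qed.

Lemma rank_open : forall A k U, proper_b k A = true -> rank (open_rec k U A) <= rank A.
Proof.
  induction A; intros k U Hp.
  - simpl. auto.
  - simpl in Hp. simpl. destruct (Nat.eqb_spec i k); simpl in *; try lia.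
  - simpl open_rec. simpl rank at 1.
    destruct (topv (TArr (open_rec k U A1) (open_rec k U A2))) eqn:E; [lia|].
    simpl rank. destruct (topv (TArr A1 A2)) eqn:E2.
    + apply (topv_open _ k U) in E2. simpl in E2. rewrite E2 in E. discriminate.
    + simpl in Hp. rewrite topv_arr in E2. rewrite E2, orb_false_r in Hp.
      apply andb_true_iff in Hp as [H1 H2].
      specialize (IHA1 k U H1); specialize (IHA2 k U H2). lia.
  - simpl. destruct (topv (TLater (open_rec k U A))); lia.
  - simpl open_rec. simpl rank at 1.
    destruct (topv (TMu (open_rec (S k) U A))) eqn:E; [lia|].
    simpl rank. destruct (topv (TMu A)) eqn:E2.
    + apply (topv_open _ k U) in E2. simpl in E2. rewrite E2 in E. discriminate.
    + simpl in Hp. rewrite E2, orb_false_r in Hp.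
      specialize (IHA (S k) U Hp). lia.
Qed.

Lemma rank_mu_lt : forall A, wf (TMu A) -> topv (TMu A) = false ->
  rank (open A (TMu A)) < rank (TMu A).
Proof.
  intros. unfold wf in H; simpl in H. apply andb_true_iff in H as [H1 H2].
  pose proof (rank_open A 0 (TMu A) H2). unfold open.
  simpl rank at 2. rewrite H0. lia.
Qed.

Lemma rank_arr : forall A B, topv (TArr A B) = false ->
  rank A < rank (TArr A B) /\ rank B < rank (TArr A B).
Proof.
  intros. simpl rank at 2 4. rewrite H. lia.
Qed.

Lemma proper_open : forall Y A k U, proper Y A = true -> proper Y U = true ->
  proper Y (open_rec k U A) = true.
Proof.
  induction A; simpl; intros; auto.
  - destruct (Nat.eqb_spec i k); auto.
  - apply orb_true_iff in H as [H|H].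
    + apply andb_true_iff in H as [H2 H3]. rewrite IHA1, IHA2; auto.
    + rewrite topv_open; auto. apply orb_true_r.
  - apply orb_true_iff in H as [H|H].
    + rewrite IHA; auto.
    + apply orb_true_iff; right. apply (topv_open (TMu A) k U); auto.
Qed.

Lemma fv_open : forall A k U Y, In Y (fv (open_rec k U A)) -> In Y (fv A) \/ In Y (fv U).
Proof.
  induction A; simpl; intros; auto.
  - destruct (Nat.eqb_spec i k); simpl in H; auto.
  - apply in_app_or in H as [H|H].
    + destruct (IHA1 _ _ _ H); auto. left; apply in_or_app; auto.
    + destruct (IHA2 _ _ _ H); auto. left; apply in_or_app; auto.
  - eauto.
  - eauto.
Qed.

Lemma msubst_open : forall s A k U, (forall Y, sc 0 (s Y) = true) ->
  msubst s (open_rec k U A) = open_rec k (msubst s U) (msubst s A).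
Proof.
  induction A; simpl; intros; auto.
  - rewrite (open_sc_id _ 0); auto; lia.
  - destruct (Nat.eqb_spec i k); auto.
  - rewrite IHA1, IHA2; auto.
  - rewrite IHA; auto.
  - rewrite IHA; auto.
Qed.

Lemma proper_b_msubst : forall s A j, (forall Y, sc 0 (s Y) = true) ->
  proper_b j A = true -> proper_b j (msubst s A) = true.
Proof.
  induction A; simpl; intros; auto.
  - apply (proper_b_sc _ 0); auto; lia.
  - apply orb_true_iff in H0 as [H0|H0].
    + apply andb_true_iff in H0 as [H2 H3]. rewrite IHA1, IHA2; auto.
    + rewrite topv_msubst; auto. apply orb_true_r.
  - apply orb_true_iff in H0 as [H0|H0].
    + rewrite IHA; auto.
    + apply orb_true_iff; right. apply (topv_msubst s (TMu A)); auto.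
Qed.

Lemma wf_msubst : forall s A n, (forall Y, wf (s Y)) -> wf_rec n A = true ->
  wf_rec n (msubst s A) = true.
Proof.
  induction A; simpl; intros; auto.
  - apply (wf_weaken _ 0); [apply H | lia].
  - apply andb_true_iff in H0 as [H1 H2]; rewrite IHA1, IHA2; auto.
  - apply andb_true_iff in H0 as [H1 H2]; rewrite IHA; auto.
    apply proper_b_msubst; auto. intros; apply wf_sc; apply H.
Qed.

Lemma msubst_id : forall A, msubst TFree A = A.
Proof. induction A; simpl; f_equal; auto. Qed.

Definition s1 (X : nat) (U : ty) : nat -> ty := fun Z => if Nat.eqb Z X then U else TFree Z.

Lemma msubst_s1 : forall X U A, msubst (s1 X U) A = subst X U A.
Proof. induction A; simpl; f_equal; auto. Qed.

Lemma proper_b_close : forall A j k X, proper_b j A = true -> j <> k ->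
  proper_b j (close_rec k X A) = true.
Proof.
  induction A; simpl; intros; auto.
  - destruct (Nat.eqb_spec X X0); simpl; auto. destruct (Nat.eqb_spec k j); simpl; auto; lia.
  - apply orb_true_iff in H as [H|H].
    + apply andb_true_iff in H as [H2 H3]. rewrite IHA1, IHA2; auto.
    + unfold topv in *. rewrite topv_close_gen by (simpl; lia). rewrite H. apply orb_true_r.
  - apply orb_true_iff in H as [H|H].
    + rewrite IHA; auto.
    + apply orb_true_iff; right. pose proof (topv_close (TMu A) k X). simpl close_rec in H1.
      rewrite H1; auto.
Qed.

Lemma wf_close_gen : forall A n X, wf_rec n A = true -> wf_rec (S n) (close_rec n X A) = true.
Proof.
  induction A; simpl; intros; auto.
  - destruct (Nat.eqb_spec X X0); simpl; auto; apply Nat.ltb_lt; lia.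
  - apply Nat.ltb_lt in H; apply Nat.ltb_lt; lia.
  - apply andb_true_iff in H as [H1 H2]; rewrite IHA1, IHA2; auto.
  - apply andb_true_iff in H as [H1 H2]; rewrite IHA; auto.
    apply proper_b_close; auto.
Qed.

Lemma proper_close : forall A n X, wf_rec n A = true -> proper X A = true ->
  proper_b n (close_rec n X A) = true.
Proof.
  induction A; simpl; intros; auto.
  - destruct (Nat.eqb_spec X X0); simpl in *; subst; auto. discriminate.

  - apply Nat.ltb_lt in H. destruct (Nat.eqb_spec i n); simpl; auto; lia.
  - apply andb_true_iff in H as [H1 H2].
    apply orb_true_iff in H0 as [H0|H0].
    + apply andb_true_iff in H0 as [H3 H4]. rewrite IHA1, IHA2; auto.
    + pose proof (topv_close A2 n X). rewrite H0 in H. rewrite H. apply orb_true_r.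
  - apply andb_true_iff in H as [H1 H2].
    apply orb_true_iff in H0 as [H0|H0].
    + rewrite IHA; auto.
    + apply orb_true_iff; right. pose proof (topv_close (TMu A) n X). simpl close_rec in H.
      rewrite H; auto.
Qed.

Lemma wf_mu_close : forall A X, wf A -> proper X A = true -> wf (TMu (close X A)).
Proof.
  unfold wf, close; intros; simpl. rewrite wf_close_gen; auto. simpl.
  apply proper_close; auto.
Qed.

Lemma open_close : forall A k X U, wf_rec k A = true ->
  open_rec k U (close_rec k X A) = subst X U A.
Proof.
  induction A; simpl; intros; auto.
  - destruct (Nat.eqb_spec X X0); simpl; auto. rewrite Nat.eqb_refl; auto.
  - apply Nat.ltb_lt in H. destruct (Nat.eqb_spec i k); auto; lia.
  - apply andb_true_iff in H as [H1 H2]; rewrite IHA1, IHA2; auto.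
  - rewrite IHA; auto.
  - apply andb_true_iff in H as [H1 H2]; rewrite IHA; auto.
Qed.

Lemma proper_notin : forall Y A, ~ In Y (fv A) -> proper Y A = true.
Proof.
  induction A; simpl; intros; auto.
  - destruct (Nat.eqb_spec X Y); subst; simpl; auto.
  - rewrite IHA1, IHA2; auto; intro; apply H; apply in_or_app; auto.
  - rewrite IHA; auto.
Qed.

Lemma lct_closet : forall M n x, lct_rec n M = true -> lct_rec (S n) (closet_rec n x M) = true.
Proof.
  induction M; simpl; intros; auto.
  - destruct (Nat.eqb_spec x x0); simpl; auto; apply Nat.ltb_lt; lia.
  - apply Nat.ltb_lt in H; apply Nat.ltb_lt; lia.
  - apply andb_true_iff in H as [H1 H2]; rewrite IHM1, IHM2; auto.
Qed.

Lemma wf_top : wf top.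
Proof. reflexivity. Qed.
Lemma topv_top : topv top = true.
Proof. reflexivity. Qed.

Definition Rlt (F : frame) (q p : W F) : Prop := clos_trans (W F) (R F) p q.

Lemma wfR (F : frame) : well_founded (fun q p => R F p q).
Proof.
  set (RR := fun q p => R F p q).
  intro a. apply NNPP; intro Ha.
  assert (step : forall x, ~ Acc RR x -> exists y, R F x y /\ ~ Acc RR y).
  { intros x Hx. apply NNPP; intro Hn. apply Hx. constructor. intros y Hy.
    apply NNPP; intro Hy'. apply Hn. exists y; auto. }
  set (g := fun s : {x | ~ Acc RR x} =>
        let e := constructive_indefinite_description _ (step _ (proj2_sig s)) in
        exist (fun x => ~ Acc RR x) (proj1_sig e) (proj2 (proj2_sig e))).
  set (f := fun n => nat_rect (fun _ => {x | ~ Acc RR x}) (exist _ a Ha) (fun _ s => g s) n).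
  apply (R_wf F). exists (fun n => proj1_sig (f n)). intro n.
  simpl. unfold g. destruct (constructive_indefinite_description _ _) as [y [Hy1 Hy2]].
  simpl. exact Hy1.
Qed.

Lemma Rlt_flip (F : frame) : forall q p, Rlt F q p -> clos_trans (W F) (fun q p => R F p q) q p.
Proof.
  intros q p H. unfold Rlt in H. induction H.
  - apply t_step; auto.
  - eapply t_trans; eauto.
Qed.

Lemma wf_Rlt (F : frame) : well_founded (Rlt F).
Proof.
  apply (wf_incl _ _ _ (Rlt_flip F)). apply wf_clos_trans. apply wfR.
Qed.

Section FrameLemmas.
Variable F : frame.

Lemma rstar_cases : forall p q, Rstar F p q -> q = p \/ Rlt F q p.
Proof.
  intros p q H. unfold Rstar in H. induction H; auto.
  - right; apply t_step; auto.
  - destruct IHclos_refl_trans1; destruct IHclos_refl_trans2; subst; auto.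
    right; eapply t_trans; eauto.
Qed.

Lemma Rlt_Rstar : forall p q, Rlt F q p -> Rstar F p q.
Proof.
  intros p q H. induction H.
  - apply rt_step; auto.
  - eapply rt_trans; eauto.
Qed.

Lemma R_Rlt : forall p q, R F p q -> Rlt F q p.
Proof. intros; apply t_step; auto. Qed.

Lemma R_Rstar : forall p q, R F p q -> Rstar F p q.
Proof. intros; apply rt_step; auto. Qed.

Lemma Rstar_refl : forall p, Rstar F p p.
Proof. intros; apply rt_refl. Qed.

Lemma Rstar_trans : forall p q r, Rstar F p q -> Rstar F q r -> Rstar F p r.
Proof. intros; eapply rt_trans; eauto. Qed.

Lemma Rstar_Rlt_trans : forall p q r, Rstar F p q -> Rlt F r q -> Rlt F r p.
Proof.
  intros. destruct (rstar_cases _ _ H); subst; auto. eapply t_trans; eauto.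
Qed.

Lemma Rlt_Rstar_trans : forall p q r, Rlt F q p -> Rstar F q r -> Rlt F r p.
Proof.
  intros. destruct (rstar_cases _ _ H0); subst; auto. eapply t_trans; eauto.
Qed.

Lemma Rlt_last : forall p r, Rlt F r p -> exists t, Rstar F p t /\ R F t r.
Proof.
  intros p r H. unfold Rlt in H. apply clos_trans_tn1 in H.
  induction H as [y Hy | y z Hyz Hxy IH].
  - exists p; split; auto. apply Rstar_refl.
  - exists y; split; auto. apply Rlt_Rstar. apply clos_tn1_trans; auto.
Qed.

Lemma wr_ind : forall (P : W F -> ty -> Prop),
  (forall p A, (forall q B, Rlt F q p -> P q B) -> (forall B, rank B < rank A -> P p B) -> P p A) ->
  forall p A, P p A.
Proof.
  intros P H p. induction p as [p IHp] using (well_founded_induction (wf_Rlt F)).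
  intro A. remember (rank A) as n eqn:E. revert A E.
  induction n as [n IHn] using lt_wf_ind. intros A E. apply H; auto.
  intros B HB. apply (IHn (rank B)); auto. lia.
Qed.

End FrameLemmas.

Lemma wf_arr : forall A B, wf (TArr A B) <-> wf A /\ wf B.
Proof. unfold wf; simpl; intros. apply andb_true_iff. Qed.
Lemma wf_later : forall A, wf (TLater A) <-> wf A.
Proof. unfold wf; simpl; intros. tauto. Qed.

Section Sem.
Variable L : lam_alg.
Variable F : frame.
Variable eta : nat -> W F -> V L -> Prop.
Variable I : ty -> W F -> V L -> Prop.
Hypothesis HI : interp_spec L F eta I.

Lemma topv_V : forall A p u, wf A -> topv A = true -> I A p u.
Proof. intros; apply (proj1 HI); auto. Qed.

Lemma SC_var : forall X p u, I (TFree X) p u <-> eta X p u.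
Proof. intros; apply (proj1 (proj2 HI)); auto. Qed.

Lemma SC_later : forall A p u, wf A -> (I (TLater A) p u <-> forall q, R F p q -> I A q u).
Proof.
  intros. destruct (topv A) eqn:E.
  - split; intros; apply topv_V; auto; apply wf_later; auto.
  - apply (proj1 (proj2 (proj2 HI))); auto.
Qed.

Lemma SC_arr : forall A B p u, wf A -> wf B ->
  (I (TArr A B) p u <-> forall q, Rstar F p q -> forall v, I A q v -> I B q (Defs.app L u v)).
Proof.
  intros. destruct (topv B) eqn:E.
  - split; intros; apply topv_V; auto; apply wf_arr; auto.
  - apply (proj1 (proj2 (proj2 (proj2 HI)))); auto. all: try (apply wf_arr; auto).
Qed.

Lemma SC_mu : forall A p u, wf (TMu A) -> (I (TMu A) p u <-> I (open A (TMu A)) p u).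
Proof.
  intros. destruct (topv (TMu A)) eqn:E.
  - split; intros; apply topv_V; auto. apply wf_open; auto. apply topv_unfold; auto.
  - apply (proj2 (proj2 (proj2 (proj2 HI)))); auto.
Qed.

Hypothesis Heta : hereditary F eta.

Lemma hered : forall p A, wf A -> forall u q, I A p u -> R F p q -> I A q u.
Proof.
  apply (wr_ind F (fun p A => wf A -> forall u q, I A p u -> R F p q -> I A q u)).
  intros p A IHw IHr Hwf u q H Hpq.
  destruct (topv A) eqn:Et. { apply topv_V; auto. }
  destruct A.
  - apply SC_var in H; apply SC_var; eapply Heta; eauto.
  - unfold wf in Hwf; discriminate.
  - apply wf_arr in Hwf as [H1 H2]. rewrite SC_arr in H |- *; auto.
    intros r Hr v Hv. apply H; auto. eapply Rstar_trans; eauto. apply R_Rstar; auto.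
  - apply wf_later in Hwf. rewrite SC_later in H |- *; auto.
    intros r Hr. apply (IHw q A); auto. apply R_Rlt; auto.
  - rewrite SC_mu in H |- *; auto. apply (IHr (open A (TMu A))); auto.
    apply rank_mu_lt; auto. apply wf_open; auto.
Qed.

Lemma hered_star : forall p q A u, wf A -> I A p u -> Rstar F p q -> I A q u.
Proof.
  intros p q A u Hw H Hpq. induction Hpq; auto. eapply hered; eauto.
Qed.

End Sem.

Section Exist.
Variable L : lam_alg.
Variable F : frame.
Variable eta : nat -> W F -> V L -> Prop.

Fixpoint J (p : W F) (rec : forall q, Rlt F q p -> ty -> V L -> Prop) (n : nat) (A : ty)
  (u : V L) {struct n} : Prop :=
  match n with
  | 0 => True
  | S n' =>
    if topv A then True else
    match A with
    | TFree X => eta X p u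
    | TBound _ => True
    | TLater A' => forall q (H : R F p q), rec q (R_Rlt F p q H) A' u
    | TArr A1 A2 => (forall v, J p rec n' A1 v -> J p rec n' A2 (Defs.app L u v)) /\
                    (forall q (H : Rlt F q p) v, rec q H A1 v -> rec q H A2 (Defs.app L u v))
    | TMu A' => J p rec n' (open A' (TMu A')) u
    end
  end.

Definition Fstep (p : W F) (rec : forall q, Rlt F q p -> ty -> V L -> Prop) : ty -> V L -> Prop :=
  fun A u => J p rec (S (rank A)) A u.

Definition Ifix : W F -> ty -> V L -> Prop :=
  Fix (wf_Rlt F) (fun _ => ty -> V L -> Prop) Fstep.

Lemma Ifix_eq : forall p, Ifix p = Fstep p (fun q _ => Ifix q).
Proof.
  intro p. unfold Ifix. apply (Fix_eq (wf_Rlt F) (fun _ => ty -> V L -> Prop) Fstep). intros x f g H.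
  assert (f = g) by (apply functional_extensionality_dep; intro y;
                     apply functional_extensionality_dep; intro; auto).
  subst; auto.
Qed.

Lemma J_fuel : forall n m A p rec u, wf A -> rank A < n -> rank A < m ->
  (J p rec n A u <-> J p rec m A u).
Proof.
  induction n; intros m A p rec u Hw Hn Hm; [lia|].
  destruct m; [lia|]. cbn [J].
  destruct (topv A) eqn:Et; [tauto|].
  destruct A.
  - tauto.
  - unfold wf in Hw; discriminate.
  - apply wf_arr in Hw as [H1 H2]. destruct (rank_arr A1 A2 Et).
    split; intros [Ha Hb]; split; auto; intros v Hv.
    + apply (IHn m); try lia; auto. apply Ha. apply (IHn m); try lia; auto.
    + apply (IHn m); try lia; auto. apply Ha. apply (IHn m); try lia; auto.
  - tauto.
  - pose proof (rank_mu_lt A Hw Et). apply IHn; try lia. apply wf_open; auto.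
Qed.

Definition Iex (A : ty) (p : W F) (u : V L) : Prop := Ifix p A u.

Lemma Iex_unfold : forall A p u, Iex A p u <-> J p (fun q _ => Ifix q) (S (rank A)) A u.
Proof. intros. unfold Iex. rewrite Ifix_eq. unfold Fstep. tauto. Qed.

Lemma Iex_spec : interp_spec L F eta Iex.
Proof.
  split; [|split; [|split; [|split]]].
  - intros A p u Hw Ht. apply Iex_unfold. cbn [J]. rewrite Ht. auto.
  - intros X p u _. rewrite Iex_unfold. cbn [J]. simpl. tauto.
  - intros A p u Hw Ht. rewrite Iex_unfold. cbn [J]. rewrite Ht.
    split; intros H q Hq.
    + apply (H q Hq).
    + apply (H q Hq).
  - intros A B p u Hw Ht. rewrite Iex_unfold. cbn [J]. rewrite Ht.
    apply wf_arr in Hw as [H1 H2]. destruct (rank_arr A B Ht) as [Ha Hb].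
    assert (EA : forall v, J p (fun q _ => Ifix q) (rank (TArr A B)) A v <-> Iex A p v).
    { intro v. rewrite Iex_unfold. apply J_fuel; auto; lia. }
    assert (EB : forall v, J p (fun q _ => Ifix q) (rank (TArr A B)) B v <-> Iex B p v).
    { intro v. rewrite Iex_unfold. apply J_fuel; auto; lia. }
    split.
    + intros [K1 K2] q Hq v Hv. destruct (rstar_cases F _ _ Hq).
      * subst. apply EB. apply K1. apply EA. auto.
      * apply (K2 q H v). apply Hv.
    + intros K. split.
      * intros v Hv. apply EB. apply K. apply Rstar_refl. apply EA; auto.
      * intros q Hq v Hv. apply (K q (Rlt_Rstar F _ _ Hq) v Hv).
  - intros A p u Hw Ht. rewrite Iex_unfold. cbn [J]. rewrite Ht.
    pose proof (rank_mu_lt A Hw Ht).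
    rewrite Iex_unfold. apply J_fuel; try lia. apply wf_open; auto.
Qed.

End Exist.

Lemma interp_exists : forall L F eta, exists I, interp_spec L F eta I.
Proof. intros. exists (Iex L F eta). apply Iex_spec. Qed.

Section Agree.
Variable L : lam_alg.
Variables F1 F2 : frame.
Variable h : W F1 -> W F2.
Hypothesis hR1 : forall a b, R F1 a b -> R F2 (h a) (h b).
Hypothesis hR2 : forall a b', R F2 (h a) b' -> exists b, R F1 a b /\ b' = h b.
Variable eta1 : nat -> W F1 -> V L -> Prop.
Variable I1 : ty -> W F1 -> V L -> Prop.
Hypothesis HI1 : interp_spec L F1 eta1 I1.
Variable eta2 : nat -> W F2 -> V L -> Prop.
Variable I2 : ty -> W F2 -> V L -> Prop.
Hypothesis HI2 : interp_spec L F2 eta2 I2.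
Variable sg : nat -> ty.
Hypothesis Hsg : forall Y, wf (sg Y).

Lemma h_star : forall a b', Rstar F2 (h a) b' -> exists b, Rstar F1 a b /\ b' = h b.
Proof.
  intros a b' H. unfold Rstar in H. apply clos_rt_rt1n in H.
  remember (h a) as x eqn:E. revert a E.
  induction H; intros a E; subst.
  - exists a; split; auto. apply rt_refl.
  - destruct (hR2 _ _ H) as [b [Hb ->]].
    destruct (IHclos_refl_trans_1n b (Logic.eq_refl _)) as [c [Hc ->]].
    exists c; split; auto. eapply rt_trans; [apply rt_step|]; eauto.
Qed.

Lemma h_star_fwd : forall a b, Rstar F1 a b -> Rstar F2 (h a) (h b).
Proof.
  intros a b H. induction H.
  - apply rt_step; auto.
  - apply rt_refl.
  - eapply rt_trans; eauto.
Qed.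

Lemma wf_ms : forall A, wf A -> wf (msubst sg A).
Proof. intros; apply wf_msubst; auto. Qed.

Lemma sc_sg : forall Y, sc 0 (sg Y) = true.
Proof. intros; apply wf_sc; apply Hsg. Qed.

Lemma agree : forall p A, wf A -> forall (Ps : nat -> Prop),
  (forall Y, Ps Y -> proper Y A = true) ->
  (forall Y, In Y (fv A) -> forall q, Rstar F1 p q -> (Ps Y -> Rlt F1 q p) ->
     forall u, eta2 Y (h q) u <-> I1 (sg Y) q u) ->
  forall u, I1 (msubst sg A) p u <-> I2 A (h p) u.
Proof.
  apply (wr_ind F1 (fun p A => wf A -> forall (Ps : nat -> Prop),
  (forall Y, Ps Y -> proper Y A = true) ->
  (forall Y, In Y (fv A) -> forall q, Rstar F1 p q -> (Ps Y -> Rlt F1 q p) ->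
     forall u, eta2 Y (h q) u <-> I1 (sg Y) q u) ->
  forall u, I1 (msubst sg A) p u <-> I2 A (h p) u)).
  intros p A IHw IHr Hw Ps Hp Hv u.
  destruct (topv A) eqn:Et.
  { split; intros; eapply topv_V; eauto. apply wf_ms; auto. apply topv_msubst; auto. }
  destruct A.
  - simpl. rewrite (SC_var L F2 eta2 I2 HI2). symmetry. apply Hv; simpl; auto.
    apply Rstar_refl. intro HP. apply Hp in HP. simpl in HP. rewrite Nat.eqb_refl in HP. discriminate.
  - unfold wf in Hw; discriminate.
  - apply wf_arr in Hw as [Hw1 Hw2].
    assert (Hp' : forall Y, Ps Y -> proper Y A1 = true /\ proper Y A2 = true).
    { intros Y HY. specialize (Hp Y HY). simpl in Hp. rewrite topv_arr in Et. rewrite Et, orb_false_r in Hp.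
      apply andb_true_iff; auto. }
    assert (IHc : forall B q, (B = A1 \/ B = A2) -> Rstar F1 p q ->
                   forall u, I1 (msubst sg B) q u <-> I2 B (h q) u).
    { intros B q HB Hq u0. assert (wf B) by (destruct HB; subst; auto).
      assert (Hfv : forall Y, In Y (fv B) -> In Y (fv (TArr A1 A2))).
      { intros Y HY; simpl; apply in_or_app; destruct HB; subst; auto. }
      destruct (rstar_cases F1 _ _ Hq).
      - subst q. apply (IHr B) with (Ps := Ps); auto.
        + destruct (rank_arr A1 A2 Et); destruct HB; subst; auto.
        + intros Y HY; destruct (Hp' Y HY); destruct HB; subst; auto.
      - apply (IHw q B H0 H (fun _ => False)); try tauto.
        intros Y HY r Hr _. apply Hv; auto. eapply Rstar_trans; eauto.
        intros _. eapply Rlt_Rstar_trans; eauto. }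
    simpl msubst. rewrite (SC_arr L F1 eta1 I1 HI1) by (apply wf_ms; auto).
    rewrite (SC_arr L F2 eta2 I2 HI2) by auto.
    split.
    + intros K q' Hq' v Hv2. destruct (h_star _ _ Hq') as [q [Hq ->]].
      apply (IHc A2 q); auto. apply K; auto. apply (IHc A1 q); auto.
    + intros K q Hq v Hv1. apply (IHc A2 q); auto. apply K.
      apply h_star_fwd; auto. apply (IHc A1 q); auto.
  - apply wf_later in Hw. simpl msubst.
    rewrite (SC_later L F1 eta1 I1 HI1) by (apply wf_ms; auto).
    rewrite (SC_later L F2 eta2 I2 HI2) by auto.
    assert (IHc : forall q, R F1 p q -> forall u, I1 (msubst sg A) q u <-> I2 A (h q) u).
    { intros q Hq u0. apply (IHw q A (R_Rlt F1 _ _ Hq) Hw (fun _ => False)); try tauto.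
      intros Y HY r Hr _. apply Hv; auto. eapply Rstar_trans; eauto. apply R_Rstar; auto.
      intros _. eapply Rlt_Rstar_trans; eauto. apply R_Rlt; auto. }
    split.
    + intros K q' Hq'. destruct (hR2 _ _ Hq') as [q [Hq ->]]. apply IHc; auto.
    + intros K q Hq. apply IHc; auto.
  - simpl msubst. rewrite (SC_mu L F1 eta1 I1 HI1) by (apply (wf_ms (TMu A)); auto).
    rewrite (SC_mu L F2 eta2 I2 HI2) by auto.
    unfold open. change (TMu (msubst sg A)) with (msubst sg (TMu A)).
    rewrite <- msubst_open by apply sc_sg.
    apply (IHr (open A (TMu A))) with (Ps := Ps); auto.
    + apply rank_mu_lt; auto.
    + apply wf_open; auto.
    + intros Y HY. apply proper_open; auto.
      specialize (Hp Y HY). simpl in Hp. rewrite Et, orb_false_r in Hp. auto.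
    + intros Y HY. apply fv_open in HY. apply Hv. simpl. destruct HY; auto.
Qed.

End Agree.

Lemma agree_same : forall (L : lam_alg) (F : frame)
  (eta1 : nat -> W F -> V L -> Prop) (I1 : ty -> W F -> V L -> Prop),
  interp_spec L F eta1 I1 ->
  forall (eta2 : nat -> W F -> V L -> Prop) (I2 : ty -> W F -> V L -> Prop),
  interp_spec L F eta2 I2 ->
  forall sg : nat -> ty, (forall Y, wf (sg Y)) ->
  forall p A, wf A -> forall Ps : nat -> Prop,
  (forall Y, Ps Y -> proper Y A = true) ->
  (forall Y, In Y (fv A) -> forall q, Rstar F p q -> (Ps Y -> Rlt F q p) ->
     forall u, eta2 Y q u <-> I1 (sg Y) q u) ->
  forall u, I1 (msubst sg A) p u <-> I2 A p u.
Proof.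
  intros. apply (agree L F F (fun x => x) (fun a b H => H)
    (fun a b' H => ex_intro _ b' (conj H (Logic.eq_refl _))) eta1 I1 H eta2 I2 H0 sg H1 p A H2 Ps H3 H4).
Qed.

Lemma wf_s1 : forall X U, wf U -> forall Y, wf (s1 X U Y).
Proof. intros. unfold s1. destruct (Y =? X); auto. reflexivity. Qed.

Definition Sem (A B : ty) : Prop :=
  forall (L : lam_alg) (F : frame) (eta : nat -> W F -> V L -> Prop) (I : ty -> W F -> V L -> Prop),
  hereditary F eta -> interp_spec L F eta I -> forall p u, I A p u <-> I B p u.

Lemma eq_fix_sound : forall X A C, wf A -> wf C -> proper X C = true ->
  Sem A (subst X A C) -> Sem A (TMu (close X C)).
Proof.
  intros X A C HwA HwC Hp IH L F eta I Heta HI.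
  set (M := TMu (close X C)).
  assert (HwM : wf M) by (apply wf_mu_close; auto).
  intro p. induction p as [p IHp] using (well_founded_induction (wf_Rlt F)).
  set (eta2 := fun Z q u => if Z =? X then I A q u else eta Z q u).
  assert (Hh2 : hereditary F eta2).
  { intros Z a b u Hab. unfold eta2. destruct (Z =? X).
    - intros; eapply hered; eauto.
    - apply Heta; auto. }
  destruct (interp_exists L F eta2) as [I2 HI2].
  assert (E1 : forall u, I (msubst (s1 X A) C) p u <-> I2 C p u).
  { apply (agree_same L F eta I HI eta2 I2 HI2 (s1 X A) (wf_s1 X A HwA) p C HwC (fun _ => False)); try tauto.
    intros Y _ q _ _ u. unfold eta2, s1. destruct (Y =? X); try tauto.
    symmetry; apply SC_var; auto. }
  assert (E2 : forall u, I (msubst (s1 X M) C) p u <-> I2 C p u).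
  { apply (agree_same L F eta I HI eta2 I2 HI2 (s1 X M) (wf_s1 X M HwM) p C HwC (fun Y => Y = X)).
    - intros; subst; auto.
    - intros Y _ q _ Hq u. unfold eta2, s1. destruct (Nat.eqb_spec Y X).
      + apply IHp; auto.
      + symmetry; apply SC_var; auto. }
  intro u. rewrite (IH L F eta I Heta HI p u).
  rewrite <- msubst_s1, E1, <- E2, msubst_s1.
  unfold M at 2. rewrite (SC_mu L F eta I HI) by auto.
  unfold open, close. rewrite open_close by auto. tauto.
Qed.

Lemma Rlt_first : forall (F : frame) p r, Rlt F r p -> exists t, R F p t /\ Rstar F t r.
Proof.
  intros F p r H. unfold Rlt in H. apply clos_trans_t1n in H. destruct H as [r Hr | y r Hy Hyr].
  - exists r; split; auto. apply Rstar_refl.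
  - exists y; split; auto. apply Rlt_Rstar. apply clos_t1n_trans; auto.
Qed.

Lemma eq_dist_sound : forall A B, wf A -> wf B ->
  Sem (TLater (TArr A B)) (TArr (TLater A) (TLater B)).
Proof.
  intros A B HwA HwB L F eta I Heta HI p u.
  assert (wf (TArr A B)) by (apply wf_arr; auto).
  rewrite (SC_later L F eta I HI) by auto.
  rewrite (SC_arr L F eta I HI) by (apply wf_later; auto).
  split.
  - intros K q Hq v Hv. rewrite (SC_later L F eta I HI) in Hv |- * by auto.
    intros s Hs. assert (Rlt F s p) by (eapply Rstar_Rlt_trans; eauto; apply R_Rlt; auto).
    destruct (Rlt_first F _ _ H0) as [q1 [Hq1 Hq1s]].
    specialize (K q1 Hq1). rewrite (SC_arr L F eta I HI) in K by auto.
    apply K; auto.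
  - intros K q Hq. rewrite (SC_arr L F eta I HI) by auto.
    intros r Hr v Hv.
    assert (Rlt F r p) by (eapply Rlt_Rstar_trans; eauto; apply R_Rlt; auto).
    destruct (Rlt_last F _ _ H0) as [t [Ht Htr]].
    destruct (R_loclin F t r Htr) as [r' [Htr' [Hr'r Hsucc]]].
    assert (Hpr' : Rstar F p r') by (eapply Rstar_trans; eauto).
    specialize (K r' Hpr' v).
    rewrite (SC_later L F eta I HI) in K by auto.
    rewrite (SC_later L F eta I HI) in K by auto.
    apply K; auto. intros s Hs. eapply hered_star; eauto. apply Hsucc; auto.
Qed.

Lemma eqty_sound : forall d A B, eqty d A B -> wf A /\ wf B /\ Sem A B.
Proof.
  intros d A B H. induction H; (refine (conj _ (conj _ _))).
  - auto.
  - auto.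
  - intros L F eta I Heta HI p u. tauto.
  - tauto.
  - tauto.
  - destruct IHeqty as (H1 & H2 & H3).
    intros L F eta I Heta HI p u. symmetry; eapply H3; eauto.
  - tauto.
  - tauto.
  - destruct IHeqty1 as (H1 & H2 & H3). destruct IHeqty2 as (H4 & H5 & H6).
    intros L F eta I Heta HI p u.
    rewrite (H3 L F eta I Heta HI p u). apply (H6 L F eta I Heta HI p u).
  - apply wf_later; tauto.
  - apply wf_later; tauto.
  - destruct IHeqty as (H1 & H2 & H3).
    intros L F eta I Heta HI p u.
    rewrite !(SC_later L F eta I HI) by auto.
    split; intros K q Hq; [apply (H3 L F eta I Heta HI) | apply <- (H3 L F eta I Heta HI)]; auto.
  - apply wf_arr; tauto.
  - apply wf_arr; tauto.
  - destruct IHeqty1 as (H1 & H2 & H3). destruct IHeqty2 as (H4 & H5 & H6).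
    intros L F eta I Heta HI p u.
    rewrite !(SC_arr L F eta I HI) by auto.
    split; intros K q Hq v Hv.
    + apply (H6 L F eta I Heta HI). apply K; auto. apply (H3 L F eta I Heta HI); auto.
    + apply (H6 L F eta I Heta HI). apply K; auto. apply (H3 L F eta I Heta HI); auto.
  - apply wf_arr; split; auto; apply wf_top.
  - apply wf_top.
  - assert (wf (TArr A top)) by (apply wf_arr; split; auto; apply wf_top).
    intros L F eta I Heta HI p u. split; intros; apply (topv_V L F eta I HI); auto; apply wf_top.
  - auto.
  - apply wf_open; auto.
  - intros L F eta I Heta HI p u. apply (SC_mu L F eta I HI); auto.
  - auto.
  - apply wf_mu_close; auto.
  - destruct IHeqty as (H3 & H4 & H5). apply eq_fix_sound; auto.
  - apply wf_later, wf_arr; auto.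
  - apply wf_arr; split; apply wf_later; auto.
  - apply eq_dist_sound; auto.
Qed.

Definition SubSem (g : list (nat * nat)) (A B : ty) : Prop :=
  forall (L : lam_alg) (F : frame) (eta : nat -> W F -> V L -> Prop) (I : ty -> W F -> V L -> Prop),
  hereditary F eta -> interp_spec L F eta I -> forall p,
  (forall X Y, In (X, Y) g -> forall q, Rstar F p q -> forall u, eta X q u -> eta Y q u) ->
  forall u, I A p u -> I B p u.

Section Gfam.
Variable L : lam_alg.
Variable F : frame.
Variable eta : nat -> W F -> V L -> Prop.
Variable I : ty -> W F -> V L -> Prop.
Hypothesis HI : interp_spec L F eta I.
Hypothesis Heta : hereditary F eta.

Definition Gf (p : W F) (T : ty) (q : W F) (u : V L) : Prop :=
  (Rlt F q p -> I T q u) /\ (~ Rlt F q p -> forall r, Rlt F r q -> I T r u).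

Lemma Gf_hered : forall p T, wf T -> forall a b u, R F a b -> Gf p T a u -> Gf p T b u.
Proof.
  intros p T Hw a b u Hab [G1 G2]. split.
  - intros Hb. destruct (classic (Rlt F a p)) as [Ha|Ha].
    + eapply hered; eauto.
    + apply G2; auto. apply R_Rlt; auto.
  - intros Hb r Hr. assert (Rlt F r a) by (eapply Rstar_Rlt_trans; [apply R_Rstar; eauto | auto]).
    destruct (classic (Rlt F a p)) as [Ha|Ha].
    + eapply hered_star; eauto. apply Rlt_Rstar; auto.
    + apply G2; auto.
Qed.
End Gfam.

Lemma in_FTV : forall g X Y, In (X, Y) g -> In X (FTV g) /\ In Y (FTV g).
Proof.
  intros. unfold FTV. split; apply in_flat_map; exists (X, Y); simpl; auto.
Qed.

Lemma sub_mu_sound : forall g X Y A B, wf A -> wf B -> X <> Y ->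
  ~ In X (FTV g) -> ~ In X (fv B) -> ~ In Y (FTV g) -> ~ In Y (fv A) ->
  proper X A = true -> proper Y B = true ->
  SubSem ((X, Y) :: g) A B -> SubSem g (TMu (close X A)) (TMu (close Y B)).
Proof.
  intros g X Y A B HwA HwB HXY HXg HXB HYg HYA HpA HpB IH L F eta I Heta HI p.
  set (MA := TMu (close X A)). set (MB := TMu (close Y B)).
  assert (HwMA : wf MA) by (apply wf_mu_close; auto).
  assert (HwMB : wf MB) by (apply wf_mu_close; auto).
  induction p as [p IHp] using (well_founded_induction (wf_Rlt F)).
  intros Hg.
  set (eta2 := fun Z q u => if Z =? X then Gf L F I p MA q u
                            else if Z =? Y then Gf L F I p MB q u else eta Z q u).
  assert (Hh2 : hereditary F eta2).
  { intros Z a b u Hab. unfold eta2. destruct (Z =? X); [|destruct (Z =? Y)].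
    - eapply Gf_hered; eauto.
    - eapply Gf_hered; eauto.
    - apply Heta; auto. }
  destruct (interp_exists L F eta2) as [I2 HI2].
  assert (Hg2 : forall X0 Y0, In (X0, Y0) ((X, Y) :: g) -> forall q, Rstar F p q ->
                 forall u, eta2 X0 q u -> eta2 Y0 q u).
  { intros X0 Y0 Hin q Hq u. destruct Hin as [Heq|Hin].
    - inversion Heq; subst X0 Y0. unfold eta2. rewrite Nat.eqb_refl.
      destruct (Nat.eqb_spec Y X); [congruence|]. rewrite Nat.eqb_refl.
      intros [G1 G2]. split.
      + intros Hqp. apply (IHp q Hqp); auto.
        intros X1 Y1 H1 r Hr. apply Hg; auto. eapply Rstar_trans; eauto.
      + intros Hqp r Hr. destruct (rstar_cases F _ _ Hq) as [->|]; [|contradiction].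
        apply (IHp r Hr); auto.
        * intros X1 Y1 H1 s Hs. apply Hg; auto. apply Rlt_Rstar; eapply Rlt_Rstar_trans; eauto.
    - destruct (in_FTV _ _ _ Hin) as [H1 H2]. unfold eta2.
      destruct (Nat.eqb_spec X0 X); [subst; contradiction|].
      destruct (Nat.eqb_spec X0 Y); [subst; contradiction|].
      destruct (Nat.eqb_spec Y0 X); [subst; contradiction|].
      destruct (Nat.eqb_spec Y0 Y); [subst; contradiction|].
      apply Hg; auto. }
  assert (EA : forall u, I MA p u <-> I2 A p u).
  { intro u. unfold MA at 1. rewrite (SC_mu L F eta I HI) by auto.
    unfold open, close. rewrite open_close by auto. rewrite <- msubst_s1.
    apply (agree_same L F eta I HI eta2 I2 HI2 (s1 X MA) (wf_s1 X MA HwMA) p A HwA (fun Z => Z = X)).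
    - intros; subst; auto.
    - intros Z HZ q Hq HZq u0. unfold eta2, s1. destruct (Nat.eqb_spec Z X).
      + subst. specialize (HZq (Logic.eq_refl _)). unfold Gf. split.
        * intros [G1 G2]; auto.
        * intros; split; auto. intros; contradiction.
      + destruct (Nat.eqb_spec Z Y); [subst; contradiction|].
        symmetry; apply SC_var; auto. }
  assert (EB : forall u, I MB p u <-> I2 B p u).
  { intro u. unfold MB at 1. rewrite (SC_mu L F eta I HI) by auto.
    unfold open, close. rewrite open_close by auto. rewrite <- msubst_s1.
    apply (agree_same L F eta I HI eta2 I2 HI2 (s1 Y MB) (wf_s1 Y MB HwMB) p B HwB (fun Z => Z = Y)).
    - intros; subst; auto.
    - intros Z HZ q Hq HZq u0. unfold eta2, s1. destruct (Nat.eqb_spec Z Y).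
      + subst. specialize (HZq (Logic.eq_refl _)).
        destruct (Nat.eqb_spec Y X); [congruence|]. unfold Gf. split.
        * intros [G1 G2]; auto.
        * intros; split; auto. intros; contradiction.
      + destruct (Nat.eqb_spec Z X); [subst; contradiction|].
        symmetry; apply SC_var; auto. }
  intros u Hu. apply EB. apply (IH L F eta2 I2 Hh2 HI2 p Hg2). apply EA; auto.
Qed.

Lemma sub_sound : forall g A B, sub g A B -> wf A /\ wf B /\ SubSem g A B.
Proof.
  intros g A B H. induction H; refine (conj _ (conj _ _)).
  - reflexivity.
  - reflexivity.
  - intros L F eta I Heta HI p Hg u Hu. rewrite (SC_var L F eta I HI) in *.
    apply (Hg X Y); auto. apply Rstar_refl.
  - auto.
  - apply wf_top.
  - intros L F eta I Heta HI p Hg u Hu. apply (topv_V L F eta I HI); auto. apply wf_top.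
  - apply (eqty_sound _ _ _ H0).
  - apply (eqty_sound _ _ _ H0).
  - intros L F eta I Heta HI p Hg u Hu. apply (proj2 (proj2 (eqty_sound _ _ _ H0)) L F eta I Heta HI); auto.
  - tauto.
  - tauto.
  - destruct IHsub1 as (_ & _ & S1). destruct IHsub2 as (_ & _ & S2).
    intros L F eta I Heta HI p Hg u Hu.
    apply (S2 L F eta I Heta HI p).
    + intros X Y Hin; apply Hg; apply H1; apply in_or_app; auto.
    + apply (S1 L F eta I Heta HI p); auto.
      intros X Y Hin; apply Hg; apply H1; apply in_or_app; auto.
  - apply wf_later; tauto.
  - apply wf_later; tauto.
  - destruct IHsub as (H1 & H2 & S1).
    intros L F eta I Heta HI p Hg u Hu. rewrite (SC_later L F eta I HI) in * by auto.
    intros q Hq. apply (S1 L F eta I Heta HI q); auto.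
    intros X Y Hin r Hr. apply Hg; auto. eapply Rstar_trans; eauto. apply R_Rstar; auto.
  - apply wf_arr; tauto.
  - apply wf_arr; tauto.
  - destruct IHsub1 as (H3 & H4 & S1). destruct IHsub2 as (H5 & H6 & S2).
    intros L F eta I Heta HI p Hg u Hu. rewrite (SC_arr L F eta I HI) in * by auto.
    intros q Hq v Hv.
    assert (Hgq : forall g0, (forall X Y, In (X, Y) g0 -> In (X, Y) g) ->
       forall X Y, In (X, Y) g0 -> forall r, Rstar F q r -> forall u, eta X r u -> eta Y r u).
    { intros g0 Hsub X Y Hin r Hr. apply Hg; auto. eapply Rstar_trans; eauto. }
    apply (S2 L F eta I Heta HI q).
    + apply Hgq. intros; apply H1; apply in_or_app; auto.
    + apply Hu; auto. apply (S1 L F eta I Heta HI q); auto.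
      apply Hgq. intros; apply H1; apply in_or_app; auto.
  - apply wf_mu_close; tauto.
  - apply wf_mu_close; tauto.
  - destruct IHsub as (H9 & H10 & S1).
    assert (HXY : X <> Y).
    { destruct H1 as [H1 _]. apply (H1 X Y). apply H0; simpl; auto. }
    apply sub_mu_sound; auto.
    intros L F eta I Heta HI p Hg u Hu. apply (S1 L F eta I Heta HI p); auto.
    intros X0 Y0 Hin. apply Hg. apply H0; auto.
  - auto.
  - apply wf_later; auto.
  - intros L F eta I Heta HI p Hg u Hu. rewrite (SC_later L F eta I HI) by auto.
    intros q Hq. eapply hered; eauto.
Qed.

Section Ext.
Variable F : frame.
Variable p0 : W F.

Definition extR (a b : option (W F)) : Prop :=
  match a, b with
  | Some a, Some b => R F a b
  | None, Some b => b = p0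
  | _, _ => False
  end.

Lemma ext_star : forall a b, clos_refl_trans (W F) (R F) a b ->
  clos_refl_trans (option (W F)) extR (Some a) (Some b).
Proof.
  intros a b H. induction H.
  - apply rt_step; simpl; auto.
  - apply rt_refl.
  - eapply rt_trans; eauto.
Qed.

Lemma ext_wf : ~ exists f : nat -> option (W F), forall n, extR (f n) (f (S n)).
Proof.
  intros [f Hf].
  assert (NN : forall n, exists a, f (S n) = Some a).
  { intro n. specialize (Hf n). destruct (f n), (f (S n)); simpl in Hf; try contradiction; eauto. }
  apply (R_wf F). exists (fun n => match f (S n) with Some a => a | None => p0 end).
  intro n. specialize (Hf (S n)). destruct (NN n) as [a Ha]. destruct (NN (S n)) as [b Hb].
  rewrite Ha, Hb in *. simpl in Hf. auto.
Qed.

Lemma ext_loclin : forall p q, extR p q ->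
  exists r, clos_refl_trans (option (W F)) extR p r /\ extR r q /\
    (forall s, extR r s -> clos_refl_trans (option (W F)) extR q s).
Proof.
  intros [a|] [b|] Hab; simpl in Hab; try contradiction.
  - destruct (R_loclin F a b Hab) as [r [H1 [H2 H3]]].
    exists (Some r). split; [apply ext_star; auto|split; [exact H2|]].
    intros [s|] Hs; simpl in Hs; [apply ext_star; auto | contradiction].
  - subst b. exists None. split; [apply rt_refl|split; [reflexivity|]].
    intros [s|] Hs; simpl in Hs; [subst; apply rt_refl | contradiction].
Qed.

Definition extF : frame :=
  {| W := option (W F); W_ne := inhabits None; R := extR; R_wf := ext_wf; R_loclin := ext_loclin |}.

End Ext.

Definition TySem (G : ctx) (M : tm) (A : ty) : Prop :=
  forall (L : lam_alg) (F : frame) (eta : nat -> W F -> V L -> Prop) (I : ty -> W F -> V L -> Prop),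
  hereditary F eta -> interp_spec L F eta I -> forall p rho,
  (forall x B, In (x, B) G -> I B p (rho x)) -> I A p (den L M rho).

Lemma shift_sound : forall G G' M A, wfc G -> seteq G' (later_ctx G) -> wf A ->
  TySem G' M (TLater A) -> TySem G M A.
Proof.
  intros G G' M A HG Hset HwA IH L F eta I Heta HI p rho Hrho.
  set (Fx := extF F p).
  set (eta' := fun (X : nat) (o : W Fx) (u : V L) =>
                 match o with Some q => eta X q u | None => eta X p u end).
  assert (Hh' : hereditary Fx eta').
  { intros X [a|] [b|] u Hab; simpl in Hab; try contradiction; simpl.
    - apply Heta; auto.
    - subst; auto. }
  destruct (interp_exists L Fx eta') as [I' HI'].
  assert (Eq : forall B q u, wf B -> (I B q u <-> I' B (Some q) u)).
  { intros B q u HwB. rewrite <- (msubst_id B) at 1.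
    apply (agree L F Fx (@Some (W F)) (fun a b H => H)
      (fun a b' H => match b' as b0 return (R Fx (Some a) b0 -> exists b, R F a b /\ b0 = Some b) with
                     | Some b => fun H => ex_intro _ b (conj H (Logic.eq_refl _))
                     | None => fun H => False_ind _ H end H)
      eta I HI eta' I' HI' TFree (fun Y => Logic.eq_refl _) q B HwB (fun _ => False)); try tauto.
    intros Y _ r _ _ u0. simpl. symmetry; apply SC_var; auto. }
  assert (HN : forall B u, wf B -> (I' (TLater B) None u <-> I B p u)).
  { intros B u HwB. rewrite (SC_later L Fx eta' I' HI') by auto. rewrite Eq by auto. split.
    - intros K. apply K. simpl. reflexivity.
    - intros K [q|] Hq; simpl in Hq; [subst; auto | contradiction]. }
  apply HN; auto.
  apply (IH L Fx eta' I' Hh' HI' None rho).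
  intros x B Hin. apply Hset in Hin. unfold later_ctx in Hin. apply in_map_iff in Hin.
  destruct Hin as [[y A0] [Heq Hin]]. simpl in Heq. inversion Heq; subst.
  apply HN. apply (proj2 HG x A0); auto. apply Hrho; auto.
Qed.

Lemma typ_sound : forall G M A, typ G M A -> lct M /\ wf A /\ TySem G M A.
Proof.
  intros G M A H. induction H; refine (conj _ (conj _ _)).
  - reflexivity.
  - apply (proj2 H x A); auto.
  - intros L F eta I Heta HI p rho Hrho. rewrite den_var. apply Hrho; auto.
  - tauto.
  - apply wf_later; tauto.
  - destruct IHtyp as (H2 & H3 & H4). apply (shift_sound G G'); auto.
  - auto.
  - apply wf_top.
  - intros L F eta I Heta HI p rho Hrho. apply (topv_V L F eta I HI); auto. apply wf_top.
  - tauto.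
  - apply (sub_sound _ _ _ H0).
  - destruct IHtyp as (H2 & H3 & H4).
    intros L F eta I Heta HI p rho Hrho. apply (proj2 (proj2 (sub_sound _ _ _ H0)) L F eta I Heta HI p).
    + intros X Y Hin; destruct Hin.
    + apply (H4 L F eta I Heta HI p rho Hrho).
  - destruct IHtyp as (H2 & H3 & H4). unfold lct in *. simpl. apply lct_closet; auto.
  - destruct IHtyp as (H2 & H3 & H4). apply wf_arr; split; auto.
    apply (proj2 H1 x A). apply H0; simpl; auto.
  - destruct IHtyp as (H2 & H3 & H4).
    assert (HwA : wf A) by (apply (proj2 H1 x A); apply H0; simpl; auto).
    intros L F eta I Heta HI p rho Hrho. rewrite (SC_arr L F eta I HI) by auto.
    intros q Hq v Hv. rewrite den_lam by auto.
    apply (H4 L F eta I Heta HI q). intros y C Hin.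
    unfold upd. destruct (Nat.eqb_spec y x).
    + subst. assert (C = A).
      { apply (proj1 H1 x C A); auto. apply H0; simpl; auto. }
      subst; auto.
    + apply H0 in Hin. destruct Hin as [Heq|Hin]; [inversion Heq; congruence|].
      eapply hered_star; eauto. apply (proj2 H1 y C). apply H0; simpl; auto.
  - destruct IHtyp1 as (H3 & H4 & H5). destruct IHtyp2 as (H6 & H7 & H8).
    unfold lct in *. simpl. rewrite H3, H6; auto.
  - destruct IHtyp1 as (H3 & H4 & H5). apply wf_arr in H4; tauto.
  - destruct IHtyp1 as (H3 & H4 & H5). destruct IHtyp2 as (H6 & H7 & H8).
    apply wf_arr in H4 as [HwA HwB].
    intros L F eta I Heta HI p rho Hrho. rewrite den_app by auto.
    assert (K := H5 L F eta I Heta HI p rho).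
    rewrite (SC_arr L F eta I HI) in K by auto.
    apply K.
    + intros x C Hin; apply Hrho; apply H1; apply in_or_app; auto.
    + apply Rstar_refl.
    + apply (H8 L F eta I Heta HI p rho). intros x C Hin; apply Hrho; apply H1; apply in_or_app; auto.
Qed.

Theorem theorem7 :
  forall (G : ctx) (M : tm) (B : ty), typ G M B ->
  forall (L : lam_alg) (F : frame) (eta : nat -> W F -> V L -> Prop)
         (I : ty -> W F -> V L -> Prop),
    hereditary F eta -> interp_spec L F eta I ->
    forall (p : W F) (rho : nat -> V L),
      (forall x A, In (x, A) G -> I A p (rho x)) ->
      I B p (den L M rho).
Proof.
  intros G M B H L F eta I Heta HI p rho Hrho.
  apply (proj2 (proj2 (typ_sound _ _ _ H)) L F eta I Heta HI p rho Hrho).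
Qed.
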